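(* Let $X$ be a linearly ordered set and let $n\ge6$ be even. Then $\mathrm{med}_3\in\langle\{m^n_{n/2}\}\rangle$ and $\mathrm{med}_3\in\langle\{m^n_{n/2+1}\}\rangle$; in each case $\mathrm{med}_3(x_1,x_2,x_3)$ is obtained by substituting into $m^n_{n/2}$ (resp. $m^n_{n/2+1}$) the tuple $(x_1,\dots,x_1,x_2,\dots,x_2,x_3,\dots,x_3)$ where $x_j$ occurs $\lfloor n/3\rfloor+1$ times if $j\le R(n/3)$ and $\lfloor n/3\rfloor$ times otherwise. Consequently these lower and upper medians generate all median functions $\mathrm{med}_m$, $m\ge3$ odd.
   Context: For $n\ge1$, $1\le k\le n$, $m^n_k(x_1,\dots,x_n)$ is the $k$-th smallest entry of $(x_1,\dots,x_n)$ (counted with multiplicity); for odd $m$, $\mathrm{med}_m=m^m_{(m+1)/2}$. $R(n/3)$ is the remainder of $n$ upon division by $3$. A clone on $X$ is a set of finitary operations containing all projections and closed under composition; $\langle\mathscr F\rangle$ is the smallest clone containing $\mathscr F$. *)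

(* Defs.v *)
From mathcomp Require Import all_boot all_order.
Set Implicit Arguments. Unset Strict Implicit. Unset Printing Implicit Defensive.
Import Order.TTheory.

Definition op (X : Type) (k : nat) := ('I_k -> X) -> X.

Definition opset (X : Type) := forall k : nat, op X k -> Prop.

Definition is_clone (X : Type) (C : opset X) : Prop :=
  (forall (k : nat) (i : 'I_k), C k (fun x => x i)) /\
  (forall (n k : nat) (f : op X n) (g : 'I_n -> op X k),
      C n f -> (forall i, C k (g i)) -> C k (fun x => f (fun i => g i x))).

Definition generated (X : Type) (F : opset X) : opset X :=
  fun k f => forall C : opset X, is_clone C ->
    (forall k' g, F k' g -> C k' g) -> C k f.
Arguments generated {X} F k f.

Definition singleton_op (X : Type) (n : nat) (f : op X n) : opset X :=
  fun k g => existT (op X) k g = existT (op X) n f.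

(* m^n_k (for n >= 1, witnessed by hn): the k-th smallest entry of
   (x_1,...,x_n), counted with multiplicity (1-based k). *)
Definition m_ {d : Order.disp_t} {X : orderType d} (n k : nat) (hn : (0 < n)%N)
  : op X n :=
  fun x => nth (x (Ordinal hn)) (sort (@Order.le d X) [seq x i | i <- enum 'I_n]) k.-1.

Arguments m_ {d X} n k hn.

Definition med {d : Order.disp_t} {X : orderType d} (m : nat) (hm : (0 < m)%N)
  : op X m := m_ m (m.+1./2) hm.
Arguments med {d X} m hm.

(* Block index of position i (0-based) in the tuple
   (x_1,..,x_1,x_2,..,x_2,x_3,..,x_3) of length n, where x_j (1-based)
   occurs n/3 + 1 times if j <= n %% 3 and n/3 times otherwise. *)
Definition block3 (n : nat) (i : nat) : 'I_3 :=
  let c0 := n %/ 3 + (0 < n %% 3) in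
  let c1 := n %/ 3 + (1 < n %% 3) in
  if i < c0 then inord 0 else if i < c0 + c1 then inord 1 else inord 2.

(* Main.v *)
Require Import Defs.
From mathcomp Require Import all_boot all_order zify.
From Stdlib Require Import FunctionalExtensionality.
Set Implicit Arguments. Unset Strict Implicit. Unset Printing Implicit Defensive.
Import Order.TTheory.

Section S.
Variables (d : Order.disp_t) (X : orderType d).

Lemma count_iota_const (p : pred nat) m n b :
  (forall i, m <= i < m + n -> p i = b) -> count p (iota m n) = b * n.
Proof.
move=> H; rewrite (@eq_in_count _ _ (fun _ => b)); last first.
  by move=> i; rewrite mem_iota => /H.
by case: b {H} => /=; [rewrite count_predT size_iota mul1n | rewrite count_pred0].
Qed.

Lemma thr_sorted (s : seq X) (z t : X) k : sorted <=%O s -> 0 < k <= size s ->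
  (t <= nth z s k.-1)%O = (count (fun y => y < t)%O s < k).
Proof.
move=> so /andP[k0 ks].
have hle : forall i j, i <= j -> j < size s -> (nth z s i <= nth z s j)%O.
  move=> i j ij js; apply: (sorted_leq_nth le_trans le_refl) => //.
  by rewrite inE; apply: leq_ltn_trans js.
have -> : count (fun y => y < t)%O s =
          count (fun i => nth z s i < t)%O (iota 0 (size s)).
  by rewrite -{1}(mkseq_nth z s) /mkseq count_map.
have E : size s = k.-1 + (size s - k.-1) by lia.
rewrite E iotaD count_cat add0n.
case: leP => [tle|ltt].
- rewrite (@count_iota_const _ k.-1 _ false) ?muln0 ?addn0; last first.
    move=> i /andP[ki ik]; apply/negbTE; rewrite -leNgt.
    apply: le_trans tle (hle _ _ ki _); lia.
  have := count_size (fun i => (nth z s i < t)%O) (iota 0 k.-1); rewrite size_iota; lia.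
- symmetry; apply/negbTE; rewrite -leqNgt.
  have E2 : k.-1 = k.-1 + 0 by rewrite addn0.
  have E3 : size s - k.-1 = 1 + (size s - k) by lia.
  rewrite E3 iotaD count_cat (@count_iota_const _ 0 _ true); last first.
    move=> i /andP[_ ik]; apply: le_lt_trans ltt; apply: hle; lia.
  rewrite /= ltt mul1n; lia.
Qed.

Lemma thr (s : seq X) (z t : X) k : 0 < k <= size s ->
  (t <= nth z (sort <=%O s) k.-1)%O = (count (fun y => y < t)%O s < k).
Proof.
move=> hk; have so : sorted <=%O (sort <=%O s) by apply: sort_sorted; exact: le_total.
rewrite thr_sorted ?size_sort //.
have P : perm_eq (sort <=%O s) s by rewrite perm_sort perm_refl.
by rewrite (permP P).
Qed.

Lemma thr_eq (a b : X) : (forall t, (t <= a)%O = (t <= b)%O) -> a = b.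
Proof.
move=> H; apply/le_anti; rewrite -H lexx /= H lexx //.
Qed.

Lemma enum_inord n : enum 'I_n.+1 = map inord (iota 0 n.+1).
Proof.
apply: (inj_map val_inj); rewrite val_enum_ord -map_comp.
rewrite -[LHS]map_id; apply/eq_in_map => i; rewrite mem_iota => /andP[_ hi] /=.
by rewrite inordK.
Qed.

Lemma med3_thr (y : 'I_3 -> X) t : (t <= med 3 isT y)%O =
  ((y (inord 0) < t)%O + (y (inord 1) < t)%O + (y (inord 2) < t)%O < 2).
Proof.
rewrite /med /m_ thr; last by rewrite size_map size_enum_ord.
by rewrite count_map enum_inord /= addn0 addnA.
Qed.

Lemma half_facts N : odd N -> N.+1 = N.+1./2 + N.+1./2.
Proof.
move=> o; have := odd_double_half N.+1; rewrite /= o /= add0n -addnn.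
by move=> ->.
Qed.

Definition thrchar a N (h : 'I_N -> 'I_a) (F : op X a) :=
  forall x t, (t <= F x)%O = (count (fun s => x (h s) < t)%O (enum 'I_N) < N.+1./2).

Lemma Fh_thr a N (h : 'I_N -> 'I_a) (hN : 0 < N) : odd N ->
  thrchar h (fun x => nth (x (h (Ordinal hN))) (sort <=%O (map (fun s => x (h s)) (enum 'I_N))) (N.+1./2).-1).
Proof.
move=> o x t; have E := half_facts o.
rewrite thr ?count_map // size_map size_enum_ord; lia.
Qed.

Lemma dom a N (h : 'I_N -> 'I_a) F (P : pred 'I_N) w : odd N -> thrchar h F ->
  (forall s, P s -> h s = w) -> N.+1./2 <= count P (enum 'I_N) ->
  forall x, F x = x w.
Proof.
move=> o hF hP hc x; have E := half_facts o; apply: thr_eq => t; rewrite hF.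
have Ec := count_predC P (enum 'I_N); rewrite size_enum_ord in Ec.
case: (ltP (x w) t) => [lt|ge].
- apply/negbTE; rewrite -leqNgt; apply: leq_trans hc _; apply: sub_count => s Ps.
  by rewrite (hP _ Ps).
- apply: leq_ltn_trans (_ : count (predC P) (enum 'I_N) < _); last by lia.
  apply: sub_count => s /=; apply: contraTN => Ps; rewrite (hP _ Ps) -leNgt //.
Qed.

Definition repl a N (h : 'I_N -> 'I_a) (p q : 'I_a) := fun s => if h s == p then q else h s.

Lemma mod_le a N (h : 'I_N -> 'I_a) p q (x : 'I_a -> X) t :
  ((x q < t)%O ==> (x p < t)%O) ->
  count (fun s => x (repl h p q s) < t)%O (enum 'I_N) <= count (fun s => x (h s) < t)%O (enum 'I_N).
Proof.
move=> H; apply: sub_count => s; rewrite /repl; case: eqP => [->|//].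
by move=> hq; move: H; rewrite hq.
Qed.

Lemma mod_ge a N (h : 'I_N -> 'I_a) p q (x : 'I_a -> X) t :
  ((x p < t)%O ==> (x q < t)%O) ->
  count (fun s => x (h s) < t)%O (enum 'I_N) <= count (fun s => x (repl h p q s) < t)%O (enum 'I_N).
Proof.
move=> H; apply: sub_count => s; rewrite /repl; case: eqP => [->|//].
by move=> hq; move: H; rewrite hq.
Qed.

Lemma arith (bu bv bw : bool) c c1 c2 c3 k :
  (bu ==> bv -> c1 <= c) -> (bv ==> bu -> c <= c1) ->
  (bv ==> bw -> c2 <= c) -> (bw ==> bv -> c <= c2) ->
  (bw ==> bu -> c3 <= c) -> (bu ==> bw -> c <= c3) ->
  (c < k) = ((k <= c1) + (k <= c2) + (k <= c3) < 2).
Proof.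
case: bu; case: bv; case: bw => /= H1 H2 H3 H4 H5 H6;
  repeat match goal with H : true -> _ |- _ => move: (H isT); clear H => ? end;
  repeat match goal with H : false -> _ |- _ => clear H end; lia.
Qed.

Lemma post (C : opset X) : is_clone C -> C 3 (med 3 isT) ->
  forall c a N (h : 'I_N -> 'I_a) F, 0 < N -> odd N -> #|h @: setT| <= c ->
  thrchar h F -> C a F.
Proof.
move=> [Cp Cc] Cm; elim=> [|c IH] a N h F hN o hc hF.
  exfalso; move: hc; rewrite leqn0 cards_eq0 => /eqP E.
  have : h (Ordinal hN) \in h @: setT by apply: imset_f; rewrite in_setT.
  by rewrite E inE.
have E := half_facts o.
case: (boolP [exists i, exists j, exists l, [&& h i != h j, h j != h l & h i != h l]]).
- move=> /existsP[i /existsP[j /existsP[l /and3P[uv vw uw]]]].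
  have inI : forall s, h s \in h @: setT by move=> s; apply: imset_f; rewrite in_setT.
  have img : forall p q, p \in h @: setT -> q \in h @: setT -> p != q ->
      #|repl h p q @: setT| <= c.
    move=> p q hp hq pq.
    have sub : repl h p q @: setT \subset (h @: setT) :\ p.
      apply/subsetP => y /imsetP[s _ ->]; rewrite /repl; case: eqP => [_|ne].
        by rewrite !inE eq_sym pq.
      by rewrite !inE inI andbT; apply/eqP.
    have := subset_leq_card sub; move: hc; rewrite (cardsD1 p) hp; lia.
  pose Fr p q : op X a := fun x => nth (x (repl h p q (Ordinal hN)))
     (sort <=%O (map (fun s => x (repl h p q s)) (enum 'I_N))) (N.+1./2).-1.
  have thrF : forall p q, thrchar (repl h p q) (Fr p q).
    by move=> p q; exact: (Fh_thr (repl h p q) hN o).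
  have step : forall p q, p \in h @: setT -> q \in h @: setT -> p != q -> C a (Fr p q).
    move=> p q hp hq pq; apply: (IH a N (repl h p q)) => //; first exact: img.
  pose G : 'I_3 -> op X a := fun k => if val k == 0 then Fr (h j) (h i)
     else if val k == 1 then Fr (h l) (h j) else Fr (h i) (h l).
  have CG : C a (fun x => med 3 isT (fun k => G k x)).
    apply: (Cc 3 a _ G Cm) => k; rewrite /G; case: ifP => _; [|case: ifP => _];
      apply: step => //; by rewrite eq_sym.
  suff -> : F = (fun x => med 3 isT (fun k => G k x)) by [].
  apply: functional_extensionality => x; apply: thr_eq => t.
  have v0 : \val (inord 0 : 'I_3) = 0 by apply: inordK.
  have v1 : \val (inord 1 : 'I_3) = 1 by apply: inordK.
  have v2 : \val (inord 2 : 'I_3) = 2 by apply: inordK.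
  rewrite hF med3_thr /G v0 v1 v2 /= !ltNge !thrF -!leqNgt.
  apply: (@arith (x (h i) < t)%O (x (h j) < t)%O (x (h l) < t)%O);
    [exact: mod_le | exact: mod_ge | exact: mod_le | exact: mod_ge | exact: mod_le | exact: mod_ge].
- move=> nex; set u := h (Ordinal hN).
  have cov : forall j s, (u == h j) || (h j == h s) || (u == h s).
    move=> j s; move/existsPn: nex => /(_ (Ordinal hN)) /existsPn /(_ j) /existsPn /(_ s).
    by rewrite !negb_and !negbK -orbA.
  case: (boolP [exists j, h j != u]).
  + move=> /existsP[j hj].
    set cu := count (fun s => h s == u) (enum 'I_N).
    have Ec := count_predC (fun s => h s == u) (enum 'I_N); rewrite size_enum_ord in Ec.
    case: (leqP (N.+1./2) cu) => Hk.
    * suff -> : F = (fun x => x u) by apply: Cp.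
      apply: functional_extensionality => x.
      by apply: (dom o hF (P := fun s => h s == u)) => // s /eqP.
    * suff -> : F = (fun x => x (h j)) by apply: Cp.
      apply: functional_extensionality => x.
      apply: (dom o hF (P := predC (fun s => h s == u))); last by lia.
      move=> s /= hs; have := cov j s.
      rewrite (eq_sym u (h j)) (negbTE hj) (eq_sym u (h s)) (negbTE hs) orbF /=.
      by move/eqP.
  + move=> /existsPn al.
    suff -> : F = (fun x => x u) by apply: Cp.
    apply: functional_extensionality => x.
    apply: (dom o hF (P := predT)); last by rewrite count_predT size_enum_ord; lia.
    by move=> s _; move: (al s); rewrite negbK => /eqP.
Qed.

Lemma count_enum_val n (P : pred nat) : count (fun s : 'I_n => P s) (enum 'I_n) = count P (iota 0 n).
Proof. by rewrite -val_enum_ord count_map. Qed.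

Lemma block_count n (P : 'I_3 -> bool) : 6 <= n ->
  count (fun j => P (block3 n j)) (iota 0 n) =
  P (inord 0) * (n %/ 3 + (0 < n %% 3)) + P (inord 1) * (n %/ 3 + (1 < n %% 3))
  + P (inord 2) * (n - (n %/ 3 + (0 < n %% 3)) - (n %/ 3 + (1 < n %% 3))).
Proof.
move=> n6; set c0 := n %/ 3 + _; set c1 := n %/ 3 + _.
have hq := divn_eq n 3; have hr : n %% 3 < 3 by rewrite ltn_mod.
have hc : c0 + c1 <= n.
  rewrite /c0 /c1; move: hq hr; case: (n %% 3) => [|[|[|r]]] //=; lia.
have -> : n = c0 + (c1 + (n - c0 - c1)) by lia.
rewrite iotaD iotaD count_cat count_cat add0n addnA.
rewrite (@count_iota_const _ 0 c0 (P (inord 0))); last first.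
  by move=> i /andP[_ hi]; rewrite /block3 -/c0 -/c1 ifT //; lia.
rewrite (@count_iota_const _ c0 c1 (P (inord 1))); last first.
  by move=> i /andP[h1 h2]; rewrite /block3 -/c0 -/c1 ifF ?ifT //; lia.
rewrite (@count_iota_const _ (c0 + c1) _ (P (inord 2))); last first.
  by move=> i /andP[h1 h2]; rewrite /block3 -/c0 -/c1 ifF ?ifF //; lia.
have -> : c0 + (c1 + (n - c0 - c1)) - c0 - c1 = n - c0 - c1 by lia.
by [].
Qed.

Lemma block_arith n K (b0 b1 b2 : bool) : 6 <= n -> ~~ odd n ->
  (K == n./2) || (K == (n./2).+1) ->
  (b0 * (n %/ 3 + (0 < n %% 3)) + b1 * (n %/ 3 + (1 < n %% 3))
  + b2 * (n - (n %/ 3 + (0 < n %% 3)) - (n %/ 3 + (1 < n %% 3))) < K)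
  = (b0 + b1 + b2 < 2).
Proof.
move=> n6 ev hK.
have hh : n = n./2 + n./2.
  by have := odd_double_half n; rewrite (negbTE ev) add0n -addnn.
have hq := divn_eq n 3; have hr : n %% 3 < 3 by rewrite ltn_mod.
move: hK hq hr; case: (n %% 3) => [|[|[|r]]] //= hK hq hr;
  case: b0; case: b1; case: b2 => /=; lia.
Qed.

Lemma block_thr n K (hn : 0 < n) (x : 'I_3 -> X) t : 6 <= n -> ~~ odd n ->
  (K == n./2) || (K == (n./2).+1) ->
  (t <= m_ n K hn (fun i => x (block3 n i)))%O = (t <= med 3 isT x)%O.
Proof.
move=> n6 ev hK.
have hh : n = n./2 + n./2.
  by have := odd_double_half n; rewrite (negbTE ev) add0n -addnn.
rewrite med3_thr /m_ thr; last by rewrite size_map size_enum_ord; move: hK => /orP[]/eqP ->; lia.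
rewrite count_map (count_enum_val n (fun j => x (block3 n j) < t)%O) (block_count (fun i => (x i < t)%O)) //.
exact: block_arith.
Qed.

Lemma gen_med3 (C : opset X) n K (hn : 0 < n) : is_clone C -> 6 <= n -> ~~ odd n ->
  (K == n./2) || (K == (n./2).+1) -> C n (m_ n K hn) -> C 3 (med 3 isT).
Proof.
move=> [Cp Cc] n6 ev hK Cl.
have -> : med 3 isT = (fun x => m_ n K hn (fun i => (fun y : 'I_3 -> X => y (block3 n i)) x)).
  apply: functional_extensionality => x; apply: thr_eq => t.
  by rewrite block_thr.
by apply: (Cc n 3 _ _ Cl) => i; apply: Cp.
Qed.

Lemma gen_all (C : opset X) (m : nat) (hm : 0 < m) : is_clone C -> C 3 (med 3 isT) ->
  odd m -> C m (med m hm).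
Proof.
move=> hC C3 o.
apply: (post hC C3 (c := #|(@id 'I_m) @: setT|) (h := id) hm o) => // x t.
have E := half_facts o.
rewrite /med /m_ thr ?count_map // size_map size_enum_ord; lia.
Qed.
End S.

Theorem mainTheorem13 (d : Order.disp_t) (X : orderType d) (n : nat)
  (hn6 : 6 <= n) (hev : ~~ odd n) :
  let hn : 0 < n := @leq_trans 6 1 n isT hn6 in
  let lo : op X n := m_ n (n./2) hn in
  let hi : op X n := m_ n (n./2).+1 hn in
  let med3 : op X 3 := med 3 isT in
  [/\ (forall x : 'I_3 -> X, med3 x = lo (fun i => x (block3 n i))),
      generated (singleton_op lo) 3 med3,
      (forall x : 'I_3 -> X, med3 x = hi (fun i => x (block3 n i))),
      generated (singleton_op hi) 3 med3 &
      (forall (m : nat) (hm : 0 < m), 3 <= m -> odd m ->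
         generated (singleton_op lo) m (med m hm) /\
         generated (singleton_op hi) m (med m hm))].
Proof.
move=> hn lo hi med3.
have Klo : (n./2 == n./2) || (n./2 == (n./2).+1) by rewrite eqxx.
have Khi : ((n./2).+1 == n./2) || ((n./2).+1 == (n./2).+1) by rewrite eqxx orbT.
have Glo : generated (singleton_op lo) 3 med3.
  move=> C hC HF; apply: (gen_med3 (hn := hn) hC hn6 hev Klo); exact: HF.
have Ghi : generated (singleton_op hi) 3 med3.
  move=> C hC HF; apply: (gen_med3 (hn := hn) hC hn6 hev Khi); exact: HF.
split => //.
- by move=> x; apply: thr_eq => t; rewrite block_thr.
- by move=> x; apply: thr_eq => t; rewrite block_thr.
- move=> m hm _ o; split => C hC HF; apply: gen_all => //.
    exact: Glo.
  exact: Ghi.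
Qed.
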